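(* Let $\mathcal{P}$ denote the family of pdCGs with vertex set $V$. The map sending a pdCG $\mathcal{G}=(\mathcal{V},\mathcal{E})$ to the quadruplet $(V,E,\mathbb{L},\mathbb{E})$, where $E$ is the union of the edge colour classes of $\mathcal{G}$, $\mathbb{L}=\{i\in L\mid \{i\}\in\mathcal{V}\}$ and $\mathbb{E}=\{(i,j)\in E_L\cap\tau(E_R)\mid \{(i,j)\}\in\mathcal{E}\}$ (with $E_L=E\cap F_L$, $E_R=E\cap F_R$), is a one-to-one correspondence between $\mathcal{P}$ and the collection of quadruplets $(V,E,\mathbb{L},\mathbb{E})$ that are compatible with $(L,R)$.
   Context: Let $V=\{1,\dots,p\}$ and let $\tau:V\to V$ be a twin-pairing function: $\tau(i)=j$ implies $\tau(j)=i$, and there is a partition $V=L\cup R$, $L\cap R=\emptyset$, with $\tau(L)=R$. The vertices are numbered so that $L=\{1,\dots,q\}$ and $R=\{q+1,\dots,p\}$. Let $F_V=\{(i,j)\mid i,j\in V,\ i<j\}$. Extend $\tau$ to edges by $\tau(i,j)=(\tau(i),\tau(j))$, with endpoints reordered if necessary so that it lies in $F_V$, and to sets elementwise. Define $F_L=\{(i,j)\in F_V\mid i<\tau(j)\}$ and $F_R=\{(i,j)\in F_V\mid i>\tau(j)\}$. A coloured graph with vertex set $V$ is a pair $(\mathcal{V},\mathcal{E})$ where $\mathcal{V}$ is a partition of $V$ and $\mathcal{E}$ is a partition of an edge set $E\subseteq F_V$. A colour class is atomic if it has one element, and twin-pairing if it is $\{i,\tau(i)\}$ or $\{(i,j),\tau(i,j)\}$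 with $(i,j)\neq\tau(i,j)$. A pdCG is a coloured graph all of whose colour classes are atomic or twin-pairing. For an undirected graph $(V,E)$ with $E\subseteq F_V$, a quadruplet $(V,E,\mathbb{L},\mathbb{E})$ is compatible with $(L,R)$ if $\mathbb{L}\subseteq L$ and $\mathbb{E}\subseteq E_L\cap\tau(E_R)$, where $E_L=E\cap F_L$, $E_R=E\cap F_R$. *)

(* Defs.v *)
(* Vertices V = {1,..,p} are represented by 'I_p = {0,..,p-1}
   (shift by one); L = {0,..,q-1}, R = {q,..,p-1}. *)
From mathcomp Require Import all_boot.
Set Implicit Arguments. Unset Strict Implicit. Unset Printing Implicit Defensive.

Section PdCG.
Variables (p q : nat) (tau : 'I_p -> 'I_p).

Definition vtx := 'I_p.
Definition edge := ('I_p * 'I_p)%type.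

Definition Lset : {set vtx} := [set i : vtx | i < q].
Definition Rset : {set vtx} := [set i : vtx | q <= i].

Definition FV : {set edge} := [set e : edge | e.1 < e.2].

Definition tauE (e : edge) : edge :=
  if tau e.1 < tau e.2 then (tau e.1, tau e.2) else (tau e.2, tau e.1).
Definition tauEs (A : {set edge}) : {set edge} := tauE @: A.

Definition FL : {set edge} := [set e in FV | e.1 < tau e.2].
Definition FR : {set edge} := [set e in FV | tau e.2 < e.1].

Definition EL (E : {set edge}) : {set edge} := E :&: FL.
Definition ER (E : {set edge}) : {set edge} := E :&: FR.

(* a coloured graph: (vertex partition, partition of an edge set E ⊆ F_V);
   the edge set E is the union (cover) of the edge colour classes *)
Definition cgraph := ({set {set vtx}} * {set {set edge}})%type.

Definition coloured_graph (G : cgraph) : Prop :=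
  [/\ partition G.1 [set: vtx], cover G.2 \subset FV & partition G.2 (cover G.2)].

Definition pdCG (G : cgraph) : Prop :=
  [/\ coloured_graph G,
      (forall C, C \in G.1 ->
         (exists i, C = [set i]) \/ (exists i, C = [set i; tau i]))
    & (forall C, C \in G.2 ->
         (exists e, C = [set e]) \/ (exists e, e != tauE e /\ C = [set e; tauE e]))].

(* quadruplet (V, E, LL, EE); V is always the fixed vertex set, so only
   (E, LL, EE) is recorded *)
Definition quad := ({set edge} * {set vtx} * {set edge})%type.

Definition compatible (Q : quad) : Prop :=
  [/\ Q.1.1 \subset FV, Q.1.2 \subset Lset & Q.2 \subset EL Q.1.1 :&: tauEs (ER Q.1.1)].

Definition quad_of (G : cgraph) : quad :=
  let E := cover G.2 in
  (E, [set i in Lset | [set i] \in G.1],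
      [set e in EL E :&: tauEs (ER E) | [set e] \in G.2]).

End PdCG.

(* Main.v *)
Require Import Defs.
From mathcomp Require Import all_boot zify.
Set Implicit Arguments. Unset Strict Implicit. Unset Printing Implicit Defensive.

Section Gen.
Variables (T : finType) (f : T -> T) (X : {set T}).
Hypothesis finv : forall x, x \in X -> f (f x) = x.

Definition bform (P : {set {set T}}) :=
  forall C, C \in P -> (exists x, C = [set x]) \/ (exists x, C = [set x; f x]).

Lemma in_cover (P : {set {set T}}) A z : A \in P -> z \in A -> z \in cover P.
Proof. by move=> AP zA; apply/bigcupP; exists A. Qed.

Lemma blockP P A z : partition P X -> bform P -> A \in P -> z \in A ->
  A = if [set z] \in P then [set z] else [set z; f z].
Proof.
move=> /and3P[/eqP cP tP _] bP AP zA.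
case: ifP => zP.
  by rewrite -(def_pblock tP AP zA) (def_pblock tP zP (set11 z)).
have zX : z \in X by rewrite -cP; exact: in_cover AP zA.
case: (bP A AP) => [[x Ax]|[x Ax]]; subst A.
  by move: zA; rewrite in_set1 => /eqP Ez; by rewrite -Ez zP in AP.
move: zA => /set2P[Ez|Ez]; first by subst z. 
have xX : x \in X by rewrite -cP; apply: in_cover AP _; exact: set21.
by rewrite Ez finv // setUC.
Qed.

Lemma uniqP P Q : partition P X -> partition Q X -> bform P -> bform Q ->
  (forall z, z \in X -> ([set z] \in P) = ([set z] \in Q)) -> P = Q.
Proof.
suff H : forall P Q, partition P X -> partition Q X -> bform P -> bform Q ->
  (forall z, z \in X -> ([set z] \in P) = ([set z] \in Q)) -> P \subset Q.
  move=> pP pQ bP bQ e; apply/eqP; rewrite eqEsubset !H //.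
  by move=> z zX; rewrite e.
move=> P' Q' pP pQ bP bQ e; apply/subsetP => A AP.
have := pP => /and3P[/eqP cP _ n0].
have := pQ => /and3P[/eqP cQ _ _].
have : A != set0 by apply: contraNneq n0 => <-.
case/set0Pn => z zA.
have zX : z \in X by rewrite -cP; exact: in_cover AP zA.
have zQ : z \in cover Q' by rewrite cQ.
rewrite (blockP pP bP AP zA) e // -(blockP pQ bQ (pblock_mem zQ)).
  exact: pblock_mem.
by rewrite mem_pblock.
Qed.

Lemma closP P x : partition P X -> bform P -> x \in X -> f x \in X ->
  [set x] \in P -> [set f x] \in P.
Proof.
move=> pP bP xX fX xP; have := pP => /and3P[/eqP cP tP _].
have fc : f x \in cover P by rewrite cP.
have Am := pblock_mem fc.
have fA : f x \in pblock P (f x) by rewrite mem_pblock.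
case: (boolP ([set f x] \in P)) => // nP.
have := blockP pP bP Am fA; rewrite (negbTE nP) => EA.
have xA : x \in pblock P (f x) by rewrite EA finv // set22.
have := blockP pP bP Am xA; rewrite xP => EA'.
move: fA; rewrite EA' in_set1 => /eqP fx; by rewrite fx xP in nP.
Qed.

Lemma nsingP P x : partition P X -> bform P -> x \in X -> [set x] \notin P ->
  f x \in X /\ f x != x.
Proof.
move=> pP bP xX xP; have := pP => /and3P[/eqP cP tP _].
have xc : x \in cover P by rewrite cP.
have Am := pblock_mem xc.
have xA : x \in pblock P x by rewrite mem_pblock.
have := blockP pP bP Am xA; rewrite (negbTE xP) => EA.
split.
  by rewrite -cP; apply: in_cover Am _; rewrite EA set22.
apply/eqP => fx; move: Am; rewrite EA fx setUid => Am.
by rewrite Am in xP.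
Qed.

Section Mk.
Variable S : {set T}.
Hypothesis SX : S \subset X.
Hypothesis Sc : forall x, x \in X -> x \notin S -> [/\ f x \in X, f x \notin S & f x != x].

Definition mkP : {set {set T}} :=
  [set [set x] | x in S] :|: [set [set x; f x] | x in X :\: S].

Lemma mkblock A z : A \in mkP -> z \in A ->
  A = if z \in S then [set z] else [set z; f z].
Proof.
case/setUP => /imsetP[x xS ->].
  by rewrite in_set1 => /eqP ->; rewrite xS.
move: xS; rewrite in_setD => /andP[xS xX].
have [fX fS _] := Sc xX xS.
case/set2P => ->; first by rewrite (negbTE xS).
by rewrite (negbTE fS) finv // setUC.
Qed.

Lemma mk_part : partition mkP X.
Proof.
apply/and3P; split.
- rewrite eqEsubset; apply/andP; split; apply/subsetP => z.
    case/bigcupP => A /setUP[] /imsetP[x xS ->].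
      by rewrite in_set1 => /eqP ->; exact: (subsetP SX).
    move: xS; rewrite in_setD => /andP[xS xX].
    have [fX _ _] := Sc xX xS.
    by case/set2P => ->.
  move=> zX; case zS: (z \in S).
    by apply: (@in_cover _ [set z]); [apply/setUP; left; apply: imset_f | apply: set11].
  apply: (@in_cover _ [set z; f z]); last exact: set21.
  by apply/setUP; right; apply: imset_f; rewrite in_setD zS zX.
- apply/trivIsetP => A B AP BP nAB; rewrite -setI_eq0; apply/eqP/setP => z.
  rewrite in_set0 in_setI; apply/negbTE/negP => /andP[zA zB].
  by move: nAB; rewrite (mkblock AP zA) (mkblock BP zB) eqxx.
- apply/negP; case/setUP => /imsetP[x _ E].
    by have := set11 x; rewrite -E in_set0.
  by have := set21 x (f x); rewrite -E in_set0.
Qed.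
Lemma mk_form C : C \in mkP ->
  (exists x, C = [set x]) \/ (exists x, x != f x /\ C = [set x; f x]).
Proof.
case/setUP => /imsetP[x xS ->]; first by left; exists x.
move: xS; rewrite in_setD => /andP[xS xX].
have [_ _ fx] := Sc xX xS.
by right; exists x; rewrite eq_sym.
Qed.

Lemma mk_bform : bform mkP.
Proof.
move=> C /mk_form [|[x [_ ->]]]; first by left.
by right; exists x.
Qed.

Lemma mk_sing x : x \in X -> ([set x] \in mkP) = (x \in S).
Proof.
move=> xX; apply/idP/idP => [H|xS]; last by apply/setUP; left; apply: imset_f.
have := mkblock H (set11 x); case: ifP => // xS E.
have [_ _ fx] := Sc xX (negbT xS).
have := set22 x (f x); rewrite -E in_set1 => fx'.
by rewrite fx' in fx.
Qed.
End Mk.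
End Gen.

Section Main.
Variables (p q : nat) (tau : 'I_p -> 'I_p).
Hypothesis Hinv : forall i, tau (tau i) = i.
Hypothesis HLR : tau @: Lset p q = Rset p q.

Lemma tau_inj : injective tau. Proof. exact: can_inj Hinv. Qed.

Lemma LR (i : 'I_p) : (i < q) = (q <= tau i).
Proof.
apply/idP/idP => H.
  have : tau i \in Rset p q by rewrite -HLR; apply: imset_f; rewrite inE.
  by rewrite inE.
have : tau i \in tau @: Lset p q by rewrite HLR inE.
by case/imsetP => j; rewrite inE => jq /tau_inj ->.
Qed.

Lemma LRn (i : 'I_p) : i < q <-> q <= tau i.
Proof. by rewrite LR. Qed.

Lemma tauE_FV e : e \in FV p -> tauE tau e \in FV p.
Proof.
case: e => a b; rewrite /tauE !inE /= => ab; case: ifP => //= /negbT.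
rewrite -leqNgt leq_eqVlt => /orP[/eqP/val_inj/tau_inj E|//].
by rewrite E ltnn in ab.
Qed.

Lemma tauEK e : e \in FV p -> tauE tau (tauE tau e) = e.
Proof.
case: e => a b; rewrite /tauE !inE /= => ab.
case: (ifP (tau a < tau b)) => h /=; rewrite !Hinv ?ab //.
by rewrite ltnNge ltnW.
Qed.

Lemma fixE e : e \in FV p -> e \notin FL tau -> e \notin FR tau -> tauE tau e = e.
Proof.
case: e => a b; rewrite /tauE !inE /= => ab; rewrite ab /= -!leqNgt => h1 h2.
have E : a = tau b by apply: val_inj; apply/eqP; rewrite eqn_leq h1 h2.
by rewrite E Hinv ltnNge ltnW // -E.
Qed.

Lemma FL_FR e : e \in FL tau -> tauE tau e \in FR tau.
Proof.
move=> eL; have eV : e \in FV p by move: eL; rewrite inE => /andP[].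
have := tauE_FV eV; move: eL eV; rewrite !inE.
case: e => a b /=; rewrite /tauE /=; case: ifP => /= h /andP[ab atb] _ -> //=;
  rewrite ?Hinv //.
have h1 := LRn a; have h2 := LRn b; have h3 := LRn (tau a); have h4 := LRn (tau b).
rewrite !Hinv in h3 h4; lia.
Qed.

Lemma FR_FL e : e \in FR tau -> tauE tau e \in FL tau.
Proof.
move=> eL; have eV : e \in FV p by move: eL; rewrite inE => /andP[].
have := tauE_FV eV; move: eL eV; rewrite !inE.
case: e => a b /=; rewrite /tauE /=; case: ifP => /= h /andP[ab atb] _ -> //=;
  rewrite ?Hinv //; lia.
Qed.

Lemma FLR e : e \in FL tau -> e \notin FR tau.
Proof. rewrite !inE => /andP[_ h]; apply/negP => /andP[_ h']; lia. Qed.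


Definition sing (E EE : {set edge p}) z :=
  [|| z \in EE, tauE tau z \in EE, tauE tau z \notin E | tauE tau z == z].

Lemma finvV : forall x, x \in [set: 'I_p] -> tau (tau x) = x.
Proof. by move=> x _; rewrite Hinv. Qed.

Lemma finvE (E : {set edge p}) : E \subset FV p ->
  forall x, x \in E -> tauE tau (tauE tau x) = x.
Proof. by move=> EV x xE; rewrite tauEK // (subsetP EV). Qed.

Lemma ebform (G : cgraph p) : pdCG tau G -> bform (tauE tau) G.2.
Proof.
case=> _ _ H C /H [|[x [_ ->]]]; first by left.
by right; exists x.
Qed.

Lemma part1 G : pdCG tau G -> compatible q tau (quad_of q tau G).
Proof.
case=> [[pV cV pE] _ _]; rewrite /compatible /quad_of /=; split => //.
- by apply/subsetP => i; rewrite inE => /andP[].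
- by apply/subsetP => e; rewrite inE => /andP[].
Qed.

Lemma edge_sing G z : pdCG tau G -> z \in cover G.2 ->
  ([set z] \in G.2) = sing (cover G.2) (quad_of q tau G).2 z.
Proof.
move=> pG; have := pG; case=> [[pV cV pE] _ _] zE.
have bE := ebform pG.
have fv := finvE cV.
rewrite /sing /quad_of /=.
have zV : z \in FV p by exact: (subsetP cV).
apply/idP/idP => [zP|].
  apply/negPn/negP; rewrite !negb_or negbK => /and4P[zEE fEE fE fz].
  case zL: (z \in FL tau).
    move/negP: zEE; apply; rewrite inE zP andbT in_setI /EL in_setI zE zL /=.
    apply/imsetP; exists (tauE tau z); last by rewrite fv.
    by rewrite /ER in_setI fE FL_FR.
  case zR: (z \in FR tau).
    move/negP: fEE; apply; rewrite inE in_setI /EL in_setI fE FR_FL //=.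
    rewrite (closP fv pE bE zE fE zP) andbT.
    by apply: imset_f; rewrite /ER in_setI zE zR.
  by rewrite fixE ?zL ?zR ?eqxx in fz.
case/or4P.
- by rewrite inE => /andP[].
- rewrite !inE => /andP[/andP[/andP[fE _] _] fP].
  by have := closP fv pE bE fE _ fP; rewrite fv // => ->.
- move=> fE; apply/negPn/negP => nz.
  by have [] := nsingP fv pE bE zE nz; rewrite (negbTE fE).
- move=> /eqP fz; apply/negPn/negP => nz.
  by have [] := nsingP fv pE bE zE nz; rewrite fz eqxx.
Qed.

Lemma vsing G z : pdCG tau G ->
  ([set z] \in G.1) = if z < q then z \in (quad_of q tau G).1.2 else tau z \in (quad_of q tau G).1.2.
Proof.
move=> pG; have := pG; case=> [[pV cV pE] bV _].
rewrite /quad_of /= !inE; case: ifP => zq; rewrite ?zq //=.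
have -> : tau z < q by rewrite LR Hinv leqNgt zq.
apply/idP/idP => H.
  by apply: (closP finvV pV bV) => //; rewrite inE.
by have := closP finvV pV bV (in_setT _) (in_setT _) H; rewrite Hinv.
Qed.

Lemma part2 G1 G2 : pdCG tau G1 -> pdCG tau G2 -> quad_of q tau G1 = quad_of q tau G2 -> G1 = G2.
Proof.
move=> p1 p2 Hq.
have := p1; case=> [[pV1 cV1 pE1] bV1 _].
have := p2; case=> [[pV2 cV2 pE2] bV2 _].
have Hc : cover G1.2 = cover G2.2 by move: Hq; rewrite /quad_of; case.
have HL : (quad_of q tau G1).1.2 = (quad_of q tau G2).1.2 by rewrite Hq.
have HE : (quad_of q tau G1).2 = (quad_of q tau G2).2 by rewrite Hq.
case: G1 p1 Hq pV1 cV1 pE1 bV1 Hc HL HE => V1 E1 p1 Hq pV1 cV1 pE1 bV1 Hc HL HE.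
case: G2 p2 Hq pV2 cV2 pE2 bV2 Hc HL HE => V2 E2 p2 Hq pV2 cV2 pE2 bV2 Hc HL HE.
simpl in *.
congr (_, _).
  apply: (uniqP finvV) => // z _.
  by rewrite (vsing z p1) (vsing z p2) Hq.
have U := uniqP (finvE cV1) pE1 (Q := E2); apply: U.
- by rewrite Hc.
- exact: (ebform p1).
- exact: (ebform p2).
move=> z zE.
rewrite (edge_sing p1 zE) /= (edge_sing p2) /=; last by rewrite -Hc.
by rewrite HE Hc.
Qed.

Lemma nofix x : tau x != x.
Proof. by apply/eqP => h; have := LR x; rewrite h; case: ltnP. Qed.

Lemma part3 Q : compatible q tau Q -> exists2 G : cgraph p, pdCG tau G & quad_of q tau G = Q.
Proof.
case: Q => [[E LL] EE]; rewrite /compatible /= => -[EV LLL EEc].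
pose S1 := [set i | (i \in LL) || (tau i \in LL)].
pose S2 := [set e in E | sing E EE e].
have fv := finvE EV.
have SX1 : S1 \subset [set: 'I_p] by apply/subsetP => x; rewrite inE.
have Sc1 : forall x, x \in [set: 'I_p] -> x \notin S1 ->
    [/\ tau x \in [set: 'I_p], tau x \notin S1 & tau x != x].
  by move=> x _; rewrite !inE Hinv orbC nofix.
have SX2 : S2 \subset E by apply/subsetP => x; rewrite inE => /andP[].
have Sc2 : forall x, x \in E -> x \notin S2 ->
    [/\ tauE tau x \in E, tauE tau x \notin S2 & tauE tau x != x].
  move=> x xE xS; move: xS; rewrite inE xE /= /sing !negb_or negbK.
  move=> /and4P[xEE fEE fE fz]; split => //.
    by rewrite inE fE /= /sing fv // xE (negbTE xEE) (negbTE fEE) eq_sym (negbTE fz).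
have pV := mk_part finvV SX1 Sc1.
have pE := mk_part fv SX2 Sc2.
have cE : cover (mkP (tauE tau) E S2) = E by case/and3P: pE => /eqP.
exists (mkP tau [set: 'I_p] S1, mkP (tauE tau) E S2).
  split; first split => //=; rewrite ?cE //.
    move=> C /(mk_form Sc1) [|[x [_ ->]]]; first by left.
    by right; exists x.
  exact: (mk_form Sc2).
rewrite /quad_of /= cE; congr (_, _, _).
  apply/setP => i; rewrite in_set (mk_sing finvV Sc1) ?inE //.
  case iL: (i \in LL); first by rewrite andbT; have := subsetP LLL i iL; rewrite inE.
  rewrite /=; apply/negP => /andP[iq tL].
  have := subsetP LLL _ tL; rewrite inE; have := LR i; rewrite iq => /esym h1 h2; lia.
apply/setP => e; rewrite in_set.
case: (boolP (e \in EL tau E :&: tauEs tau (ER tau E))) => he /=; last first.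
  by apply/esym/negP => /(subsetP EEc); rewrite (negbTE he).
have := he; rewrite in_setI /EL in_setI => /andP[/andP[eE eL] /imsetP[g]].
rewrite /ER in_setI => /andP[gE gR] eg.
rewrite (mk_sing fv Sc2) // in_set eE /= /sing.
apply/idP/idP => [|->//].
case/or4P => //.
- move/(subsetP EEc); rewrite in_setI /EL in_setI => /andP[/andP[_ fL] _].
  by have := FLR fL; rewrite FL_FR.
- by rewrite eg tauEK ?gE // (subsetP EV).
- move=> /eqP fe; have := FL_FR eL; rewrite fe => eR.
  by have := FLR eL; rewrite eR.
Qed.

End Main.

Theorem theorem4 (p q : nat) (tau : 'I_p -> 'I_p)
  (Hinv : forall i, tau (tau i) = i)
  (Hqp : q <= p)
  (HLR : tau @: Lset p q = Rset p q) :
  (forall G : cgraph p, pdCG tau G -> compatible q tau (quad_of q tau G)) /\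
  (forall G1 G2 : cgraph p, pdCG tau G1 -> pdCG tau G2 ->
     quad_of q tau G1 = quad_of q tau G2 -> G1 = G2) /\
  (forall Q : quad p, compatible q tau Q ->
     exists2 G : cgraph p, pdCG tau G & quad_of q tau G = Q).
Proof.
split; first exact: part1.
split; first exact: (part2 Hinv HLR).
exact: (part3 Hinv HLR).
Qed.
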